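(* If $X$ is an (infinite) $T_1$-space, then $\psi(X)\le nu_s(X)\cdot 2^{s(X)}$.
   Context: For a space $X$ and $A\subseteq X$, the $\theta$-closure of $A$ is $\mathrm{cl}_\theta(A):=\{y\in X:\ \overline{B}\cap A\neq\emptyset$ for every open neighborhood $B$ of $y\}$. The non-Urysohn number of $X$ with respect to singletons is $nu_s(X):=1+\sup\{|\mathrm{cl}_\theta(\{x\})|:x\in X\}$. $s(X)$ denotes the spread of $X$ (supremum of cardinalities of discrete subspaces, plus $\omega$) and $\psi(X)$ the pseudocharacter of $X$ (the supremum over $x\in X$ of the minimal cardinality of a family of open sets whose intersection is $\{x\}$). Throughout, ''space'' means infinite topological space. *)

(* Defs.v *)
From HB Require Import structures.
From mathcomp Require Import all_boot all_order.
From mathcomp Require Import all_classical all_reals all_analysis.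
Set Implicit Arguments. Unset Strict Implicit. Unset Printing Implicit Defensive.
Local Open Scope classical_set_scope.

Definition theta_closure (X : topologicalType) (A : set X) : set X :=
  [set y | forall B : set X, open B -> B y -> closure B `&` A !=set0].

Definition discrete_subspace (X : topologicalType) (D : set X) : Prop :=
  forall d, D d -> exists U : set X, [/\ open U, U d & U `&` D = [set d]].

Definition pseudochar_le (X : topologicalType) (K : Type) : Prop :=
  forall x : X, exists U : K -> set X,
    (forall i, open (U i)) /\ \bigcap_(i in [set: K]) U i = [set x].

(* Main.v *)
Require Import Defs.
From mathcomp Require Import all_boot all_order.
From mathcomp Require Import all_classical all_reals all_analysis.
Local Open Scope classical_set_scope.
Local Open Scope card_scope.
Lemma card_le_fun {T U : Type} (S : set T) : S #<= [set: U] ->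
  exists j : T -> option U, (forall x, S x -> j x <> None) /\
    (forall x y, S x -> S y -> j x = j y -> x = y).
Proof.
move/card_leP => [f].
exists (fun x => match pselect (S x) with left h => Some (val (f (exist _ x (mem_set h)))) | right _ => None end).
split.
  by move=> x Sx; case: pselect.
move=> x y Sx Sy; case: pselect => // hx; case: pselect => // hy [] /val_inj.
move=> /('inj_f); rewrite !inE => /(_ I I).
by case.
Qed.
Lemma shap (X : topologicalType) (Y : set X) (V : X -> set X)
  (Vo : forall y, Y y -> open (V y)) (Vy : forall y, Y y -> V y y) :
  exists D : set X, [/\ D `<=` Y, discrete_subspace D &
    forall y, Y y -> closure D y \/ exists2 d, D d & V d y].
Proof.
pose Q (D : set X) := D `<=` Y /\ forall d, D d -> ~ closure (D `&` V d `\ d) d.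
pose T := {D : set X | Q D}.
pose R (s t : T) := `[< sval s `<=` sval t /\
   forall d, sval s d -> forall e, sval t e -> ~ sval s e -> ~ V d e >].
have Q0 : Q set0 by split => // d [].
have [t tmax] : exists t, premaximal R t.
  apply: (@ZL_preorder T (exist _ set0 Q0)).
  - by move=> s; apply/asboolP; split => // d _ e ? ?.
  - move=> r s t /asboolP[rs rs'] /asboolP[st st']; apply/asboolP; split.
      by move=> x /rs /st.
    move=> d rd e te nre.
    have [se|nse] := pselect (sval s e); first exact: rs'.
    exact: (st' d (rs _ rd) e te nse).
  - move=> A Atot.
    have Qt : Q (\bigcup_(s in A) sval s).
      split; first by move=> x [s _ sx]; case: (svalP s) => /(_ _ sx).
      move=> d [s0 As0 s0d].
      have sub : (\bigcup_(s in A) sval s) `&` V d `\ d `<=` sval s0 `&` V d `\ d.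
        move=> e [[[s1 As1 s1e] Vde] ned]; split => //; split => //.
        have [/asboolP[h _]|/asboolP[_ h]] := Atot _ _ As1 As0; first exact: h.
        apply: contrapT => ns0e; exact: (h d s0d e s1e ns0e Vde).
      move=> /(closureS sub); exact: (svalP s0).2 _ s0d.
    exists (exist _ _ Qt) => s As; apply/asboolP; split => /=.
      by move=> x sx; exists s.
    move=> d sd e [s1 As1 s1e] nse.
    have [/asboolP[h _]|/asboolP[_ h]] := Atot _ _ As1 As; first by have := h _ s1e.
    exact: h.
case: t tmax => D QD tmax; have [DY Dd] := QD.
exists D; split => //.
  move=> d Dd0; exists (V d `&` ~` closure (D `&` V d `\ d)); split.
  - by apply: openI; [exact: Vo (DY _ Dd0)|apply: closed_openC; exact: closed_closure].
  - by split; [exact: Vy (DY _ Dd0)|exact: Dd].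
  - apply/seteqP; split; last by move=> x ->; split => //; split; [exact: Vy (DY _ Dd0)|exact: Dd].
    move=> e [[Vde ncl] De]; apply: contrapT => ned; apply: ncl.
    by apply: subset_closure; split => //; split.
move=> y Yy; apply: contrapT => /not_orP[ncl nex].
have nV : forall d, D d -> ~ V d y by move=> d Dd0 Vdy; apply: nex; exists d.
pose D' := D `|` [set y].
have QD' : Q D'.
  split; first by move=> x [/DY|->].
  move=> d [Dd0|->].
  - have sub : D' `&` V d `\ d `<=` D `&` V d `\ d.
      move=> e [[[De|->] Vde] ned]; first by split.
      by exfalso; exact: (nV d Dd0 Vde).
    by move=> /(closureS sub); exact: Dd.
  - have sub : D' `&` V y `\ y `<=` D.
      by move=> e [[[De|->] _] ned] //; exfalso; exact: ned.
    by move=> /(closureS sub).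
have RDD' : R (exist _ D QD) (exist _ D' QD').
  apply/asboolP; split => /=; first by move=> x Dx; left.
  move=> d Dd0 e [De|->] nDe; first by [].
  exact: nV.
have /asboolP[h _] := tmax _ RDD'.
apply: ncl; apply: subset_closure; apply: h; by right.
Qed.

Theorem lemma3p9 (X : topologicalType) (A B : Type)
  (Xinf : infinite_set [set: X]) (XT1 : accessible_space X)
  (hA : forall x : X, theta_closure [set x] #<= [set: A])
  (hBinf : [set: nat] #<= [set: B])
  (hB : forall D : set X, discrete_subspace D -> D #<= [set: B]) :
  pseudochar_le X (option A * (B -> bool)).
Proof.
move=> p.
pose C := theta_closure [set p].
pose Y := ~` C.
have hV : forall y, exists W : set X, Y y -> [/\ open W, W y & ~ closure W p].
  move=> y; have [Yy|nYy] := pselect (Y y); last by exists setT.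
  apply: contrapT => H; apply: Yy => B0 oB By.
  apply: contrapT => H2; apply: H; exists B0 => _; split => //.
  by move=> clp; apply: H2; exists p.
have [V HV] := choice hV.
have HVo : forall y, Y y -> open (V y) by move=> y /HV[].
have HVy : forall y, Y y -> V y y by move=> y /HV[].
have [D [DY Ddisc Dcov]] := @shap X Y V HVo HVy.
have [jB [jBD jBinj]] := @card_le_fun _ _ _ (hB D Ddisc).
have [jA [jAC jAinj]] := @card_le_fun _ _ _ (hA p).
pose G (S : set X) := ~` closure S `|` [set _ | closure S p].
have Gopen : forall S, open (G S).
  move=> S; apply: openU; first by apply: closed_openC; exact: closed_closure.
  have [h|h] := pselect (closure S p).
    have -> : [set _ : X | closure S p] = setT by apply/seteqP; split.
    exact: openT.
  have -> : [set _ : X | closure S p] = set0 by apply/seteqP; split.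
  exact: open0.
have Gp : forall S, G S p.
  by move=> S; have [h|h] := pselect (closure S p); [right|left].
have Gy : forall S y, closure S y -> ~ closure S p -> ~ G S y.
  by move=> S y h1 h2 [].
pose Tset (oa : option A) : set X := match oa with
  | None => setT
  | Some a => ~` [set c | C c /\ c <> p /\ jA c = Some a] end.
have Topen : forall oa, open (Tset oa).
  case => [a|] /=; last exact: openT.
  apply: closed_openC.
  have [[c0 [Cc0 [c0p jc0]]]|nex] := pselect (exists c, C c /\ c <> p /\ jA c = Some a).
    have -> : [set c | C c /\ c <> p /\ jA c = Some a] = [set c0].
      apply/seteqP; split; last by move=> x ->.
      move=> x [Cx [xp jx]]; apply: jAinj => //; by rewrite jx jc0.
    exact: accessible_closed_set1.
  have -> : [set c | C c /\ c <> p /\ jA c = Some a] = set0.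
    by apply/seteqP; split => // x hx; apply: nex; exists x.
  exact: closed0.
have Tp : forall oa, Tset oa p by case => [a|] //= [_ []].
pose E (f : B -> bool) := [set d | D d /\ exists b, jB d = Some b /\ f b].
pose U (i : option A * (B -> bool)) :=
  Tset i.1 `&` G (E i.2) `&` G (\bigcup_(d in E i.2) V d).
exists U; split.
  by move=> i; apply: openI; [apply: openI|]; [exact: Topen|exact: Gopen|exact: Gopen].
apply/seteqP; split; last first.
  by move=> _ -> i _; split; [split|]; [exact: Tp|exact: Gp|exact: Gp].
move=> y Uy; apply: contrapT => nyp.
have [Cy|nCy] := pselect (C y).
  case Ejy : (jA y) => [a|]; last exact: (jAC y Cy Ejy).
  have [[+ _] _] := Uy (Some a, fun _ => false) I.
  by apply; split.
have Yy : Y y by [].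
have [VyO Vyy Vyp] := HV y Yy.
case: (Dcov y Yy) => [clD|[d Dd Vdy]].
  pose f := fun b => `[< exists e, D e /\ V y e /\ jB e = Some b >].
  have EV : E f `<=` V y.
    move=> d [Dd [b [jd /asboolP[e [De [Vye je]]]]]].
    have -> : d = e by apply: jBinj => //; rewrite jd je.
    exact: Vye.
  have [[_ +] _] := Uy (None, f) I.
  apply: Gy => /=; last by move/(closureS EV).
  move=> N Ny.
  have NV : nbhs y (N `&` V y) by apply: filterI => //; apply: open_nbhs_nbhs.
  have [e [De [Ne Vye]]] := clD _ NV.
  exists e; split => //; split => //.
  case Eje : (jB e) => [b|]; last by case: (jBD e De Eje).
  exists b; split => //; apply/asboolP; exists e; by [].
have [_ _ dVp] := HV d (DY d Dd).
pose f := fun b => `[< jB d = Some b >].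
have Ed : E f `<=` [set d].
  move=> e [De [b [je /asboolP jd]]]; apply: jBinj => //; by rewrite je jd.
have dE : E f d.
  split => //; case Ejd : (jB d) => [b|]; last by case: (jBD d Dd Ejd).
  by exists b; split => //; apply/asboolP.
have sub : \bigcup_(e in E f) V e `<=` V d.
  by move=> x [e /Ed -> ].
have [_ +] := Uy (None, f) I.
apply: Gy => /=; last by move/(closureS sub).
apply: subset_closure; by exists d.
Qed.
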